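(* Let $X$ be a topologically complete space and $\mathcal A$ a family of closed, locally finite, normal covers of $X$ satisfying conditions (I) and (II), with $\Lambda$, $N_\lambda$, $N_\infty$, $N^{(0)}_\infty$, $\mathrm{cov}_\lambda$, $\sigma_\lambda$, $\wedge$ and $\pi:N_\infty\to X$ as in the context. Then: (1) the map $\pi$ is continuous; (2) for $z,z'\in N^{(0)}_\infty$, $\pi(z')=\pi(z)$ if and only if $\wedge z'(\lambda)\in\mathrm{star}_{\mathrm{cov}_\lambda}(\wedge z(\lambda))$ (i.e. $\wedge z'(\lambda)\cap\wedge z(\lambda)\neq\emptyset$) for each $\lambda\in\Lambda$; (3) if $z\in N_\infty$ and $z_0\in N^{(0)}_\infty$ satisfy that $z_0(\lambda)$ is a vertex of $\sigma_\lambda(z(\lambda))$ for each $\lambda\in\Lambda$, then $\pi(z)=\pi(z_0)$.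
   Context: A topologically complete space is a Tychonoff space complete with respect to its finest uniformity. A closed, locally finite, normal cover $\alpha$ of $X$ is a locally finite cover by closed sets admitting a partition of unity $\{\phi_{\alpha,V}:V\in\alpha\}$ with $\mathrm{cl}(\phi_{\alpha,V}^{-1}((0,1]))\subset\mathrm{int}(V)$, $\sum_V\phi_{\alpha,V}=1$. For a cover $\alpha$ and a set $S$, $\mathrm{star}_\alpha(S)=\{V\in\alpha:V\cap S\neq\emptyset\}$; $\mathrm{star}_\alpha(x)=\mathrm{star}_\alpha(\{x\})$. Conditions: (I) for each open $U\subset X$ and $x\in U$ there is $\alpha\in\mathcal A$ with $\bigcup\mathrm{star}_\alpha(x)\subset U$; (II) if $f(\alpha)\in\alpha$ is chosen for each $\alpha\in\mathcal A$ and $\{f(\alpha)\}$ has the finite intersection property, then $\bigcap_\alpha f(\alpha)\neq\emptyset$. Construction: $\Lambda$ is the set of finite subsets of $\mathcal A$ directed by inclusion. For $\lambda\in\Lambda$, $N^{(0)}_\lambda$ is the set of functions $v$ on $\lambda$ with $v(\alpha)\in\alpha$ for all $\alpha\in\lambda$ and $\wedge v:=\bigcap_{\alpha\in\lambda}v(\alpha)\neq\emptyset$ (empty intersection meaning $X$); $\mathrm{cov}_\lambda=\{\wedge v:v\in N^{(0)}_\lambda\}$. $F_\lambda$ is the simplicial complex (weak topology) with vertex set $N^{(0)}_\lambda$ in which $\{v_1,\dots,v_k\}$ spans a simplex iff $\wedge v_i\cap\wedge v_j\neq\emptyset$ for all $i,j$; $N_\lambda$ is its subcomplex with the same vertices in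 which $\{v_1,\dots,v_k\}$ spans a simplex iff $\bigcap_i\wedge v_i\neq\emptyset$. For $\lambda\subset\mu$, $\pi^\mu_\lambda$ is the simplicial map sending a vertex $v$ to $v|_\lambda$. $N_\infty=\varprojlim(N_\lambda,\pi^\mu_\lambda;\Lambda)$ with projections $\pi_\lambda$, $z(\lambda)=\pi_\lambda(z)$, and $N^{(0)}_\infty=\varprojlim(N^{(0)}_\lambda,\pi^\mu_\lambda|;\Lambda)\subset N_\infty$. For $a\in N_\lambda$, $\sigma_\lambda(a)$ is the unique simplex containing $a$ in its interior, and $\wedge a=\bigcap\{\wedge v: v\text{ a vertex of }\sigma_\lambda(a)\}$. For each $z\in N_\infty$ the set $\bigcap_{\lambda\in\Lambda}\wedge z(\lambda)$ consists of exactly one point, and $\pi:N_\infty\to X$ is defined by $\{\pi(z)\}=\bigcap_{\lambda}\wedge z(\lambda)$. *)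

(* Defs.v *)
From HB Require Import structures.
From mathcomp Require Import all_boot all_order all_algebra.
From mathcomp Require Import all_classical all_reals all_analysis.
Set Implicit Arguments. Unset Strict Implicit. Unset Printing Implicit Defensive.
Import Order.TTheory GRing.Theory Num.Theory.
Import numFieldNormedType.Exports.
Local Open Scope classical_set_scope.
Local Open Scope ring_scope.

Section Defs.
Variables (R : realType) (X : topologicalType).

Definition tychonoff : Prop :=
  (forall x : X, closed [set x]) /\
  (forall (C : set X) (x : X), closed C -> ~ C x ->
     exists f : X -> R, continuous f /\ f x = 0 /\ (forall y, C y -> f y = 1)).

Definition is_uniformity (U : set_system (X * X)) : Prop :=
  Filter U /\
  (forall A, U A -> forall x, A (x, x)) /\
  (forall A, U A -> U [set p | A (p.2, p.1)]) /\
  (forall A, U A -> exists2 B, U B &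
       forall x y z, B (x, y) -> B (y, z) -> A (x, z)).

Definition compatible_uniformity (U : set_system (X * X)) : Prop :=
  forall (x : X) (S : set X),
    nbhs x S <-> exists2 A, U A & [set y | A (x, y)] `<=` S.

Definition cauchy_wrt (U : set_system (X * X)) (F : set_system X) : Prop :=
  forall A, U A -> exists2 B, F B & forall x y, B x -> B y -> A (x, y).

(* Tychonoff and complete for its finest (fine) uniformity: a filter is Cauchy
   for the finest compatible uniformity iff it is Cauchy for every compatible
   uniformity (the finest one is the supremum of all of them). *)
Definition topologically_complete : Prop :=
  tychonoff /\
  forall F : set_system X, ProperFilter F ->
    (forall U, is_uniformity U -> compatible_uniformity U -> cauchy_wrt U F) ->
    exists x : X, nbhs x `<=` F.

Definition star (a : set (set X)) (S : set X) : set (set X) :=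
  [set V | a V /\ V `&` S !=set0].

Definition locally_finite (a : set (set X)) : Prop :=
  forall x : X, exists2 N, nbhs x N & finite_set [set V | a V /\ V `&` N !=set0].

Definition clf_normal_cover (a : set (set X)) : Prop :=
  (forall x : X, exists2 V, a V & V x) /\
  (forall V, a V -> closed V) /\
  locally_finite a /\
  exists phi : set X -> X -> R,
    (forall V, a V -> continuous (phi V)) /\
    (forall V x, a V -> 0 <= phi V x) /\
    (forall V, a V -> closure [set x | 0 < phi V x] `<=` interior V) /\
    (forall x, \sum_(V \in a) phi V x = 1).

Definition condition_I (A : set (set (set X))) : Prop :=
  forall (U : set X) (x : X), open U -> U x ->
    exists2 a, A a & \bigcup_(V in star a [set x]) V `<=` U.

Definition condition_II (A : set (set (set X))) : Prop :=
  forall f : set (set X) -> set X,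
    (forall a, A a -> a (f a)) ->
    (forall F, finite_set F -> F `<=` A -> (\bigcap_(a in F) f a) !=set0) ->
    (\bigcap_(a in A) f a) !=set0.

Definition Cov := set (set X).
Definition Vtx := Cov -> set X.   (* a vertex: a function on lambda, extended by setT *)
Definition Pt := Vtx -> R.        (* a nerve_point: barycentric coordinates *)

Definition Lam (A : set Cov) (l : set Cov) : Prop := finite_set l /\ l `<=` A.

Definition wedge (l : set Cov) (v : Vtx) : set X := \bigcap_(a in l) v a.

Definition vertex (l : set Cov) (v : Vtx) : Prop :=
  (forall a, l a -> a (v a)) /\ (forall a, ~ l a -> v a = setT) /\
  wedge l v !=set0.

Definition cov (l : set Cov) : set (set X) := [set wedge l v | v in vertex l].

Definition simplex (l : set Cov) (S : set Vtx) : Prop :=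
  finite_set S /\ S !=set0 /\ S `<=` vertex l /\ (\bigcap_(v in S) wedge l v) !=set0.

Definition sigma (p : Pt) : set Vtx := [set v | p v != 0].

(* points of the geometric realization |N_lambda| *)
Definition nerve_point (l : set Cov) (p : Pt) : Prop :=
  (forall v, 0 <= p v) /\ simplex l (sigma p) /\ \sum_(v \in sigma p) p v = 1.

Definition wedge_pt (l : set Cov) (p : Pt) : set X :=
  \bigcap_(v in sigma p) wedge l v.

(* open sets of |N_lambda| for the weak (Whitehead) topology *)
Definition weak_open (l : set Cov) (U : set Pt) : Prop :=
  forall S p, simplex l S -> nerve_point l p -> sigma p `<=` S -> U p ->
    exists2 e : R, 0 < e &
      forall q, nerve_point l q -> sigma q `<=` S ->
        (forall v, S v -> `|p v - q v| < e) -> U q.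

Definition restr (l : set Cov) (v : Vtx) : Vtx :=
  fun a => if `[< l a >] then v a else setT.

Definition proj_pt (l : set Cov) (p : Pt) : Pt :=
  fun w => \sum_(v \in [set v | restr l v = w]) p v.

(* N_infinity: threads of the inverse system *)
Definition thread (A : set Cov) (z : set Cov -> Pt) : Prop :=
  (forall l, Lam A l -> nerve_point l (z l)) /\
  (forall l m, Lam A l -> Lam A m -> l `<=` m -> forall w, z l w = proj_pt l (z m) w).

Definition is_vertex_pt (p : Pt) (v : Vtx) : Prop :=
  p v = 1 /\ forall w, w <> v -> p w = 0.

Definition thread0 (A : set Cov) (z : set Cov -> Pt) : Prop :=
  thread A z /\ forall l, Lam A l -> exists2 v, vertex l v & is_vertex_pt (z l) v.

Definition is_pi (A : set Cov) (pi : (set Cov -> Pt) -> X) : Prop :=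
  forall z, thread A z -> forall l, Lam A l -> wedge_pt l (z l) (pi z).

(* continuity of pi for the inverse-limit (product) topology on N_infinity *)
Definition nerve_pi_continuous (A : set Cov) (pi : (set Cov -> Pt) -> X) : Prop :=
  forall z, thread A z -> forall W : set X, open W -> W (pi z) ->
    exists L : set (set Cov), exists U : set Cov -> set Pt,
      [/\ finite_set L, L `<=` Lam A,
          (forall l, L l -> weak_open l (U l) /\ U l (z l)) &
          forall z', thread A z' -> (forall l, L l -> U l (z' l)) -> W (pi z')].

End Defs.

(* Main.v *)
Require Import Defs.
From HB Require Import structures.
From mathcomp Require Import all_boot all_order all_algebra.
From mathcomp Require Import all_classical all_reals all_analysis.
Import Order.TTheory GRing.Theory Num.Theory.
Import numFieldNormedType.Exports.
Local Open Scope classical_set_scope.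
Local Open Scope ring_scope.

Set Implicit Arguments.
Section Aux.
Variables (R : realType) (X : topologicalType).

Lemma wedge1 (a : set (set X)) (v : Vtx X) t : wedge [set a] v t -> v a t.
Proof. by move=> H; apply: H. Qed.

Lemma wedge_pt_sub (l : set (Cov X)) (p : Pt R X) v t :
  wedge_pt l p t -> p v != 0 -> wedge l v t.
Proof. by move=> H pv; apply: H. Qed.

Lemma vtx_nz (p : Pt R X) v : is_vertex_pt p v -> p v != 0.
Proof. by case=> -> _; exact: oner_neq0. Qed.

Lemma vtx_wedge (l : set (Cov X)) (p : Pt R X) v t :
  is_vertex_pt p v -> wedge l v t -> wedge_pt l p t.
Proof.
case=> _ H0 Hw w /= pw.
have -> : w = v by apply: contrapT => nwv; move: pw; rewrite /sigma /= H0 // eqxx.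
exact: Hw.
Qed.

Lemma lam1 (A : set (Cov X)) a : A a -> Lam A [set a].
Proof. by move=> Aa; split; [exact: finite_set1 | move=> b ->]. Qed.

Lemma starI (a : set (set X)) (U : set X) x V :
  \bigcup_(W in star a [set x]) W `<=` U -> a V -> V x -> V `<=` U.
Proof. by move=> H aV Vx t Vt; apply: H; exists V => //; split => //; exists x. Qed.

End Aux.
Arguments wedge1 {X a v t}.
Arguments wedge_pt_sub {R X l p v t}.
Arguments vtx_nz {R X p v}.
Arguments vtx_wedge {R X l p v t}.
Arguments starI {X a U x V}.

Theorem proposition2p4 (R : realType) (X : topologicalType)
  (A : set (set (set X))) (pi : (set (set (set X)) -> (set (set X) -> set X) -> R) -> X) :
  topologically_complete R X ->
  (forall a, A a -> clf_normal_cover R a) ->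
  condition_I A -> condition_II A ->
  is_pi A pi ->
  [/\ nerve_pi_continuous A pi,
      (forall z z', thread0 A z -> thread0 A z' ->
         pi z' = pi z <->
         (forall l, Lam A l ->
            star (cov l) (wedge_pt l (z l)) (wedge_pt l (z' l)))) &
      (forall z z0, thread A z -> thread0 A z0 ->
         (forall l, Lam A l -> forall v, is_vertex_pt (z0 l) v -> sigma (z l) v) ->
         pi z = pi z0)].
Proof.
move=> [[T1 CR] _] _ CI _ Hpi; split.
-
  move=> z tz W oW Wz.
  have [a Aa Ha] := CI W (pi z) oW Wz.
  set l := [set a].
  have Ll : Lam A l by exact: lam1.
  have [_ [[_ [[v0 Sv0] _]] _]] := (tz.1 l Ll).
  exists [set l], (fun _ => [set q : Pt R X | q v0 != 0]); split.
  + exact: finite_set1.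
  + by move=> m ->.
  + move=> m -> ; split; last exact: Sv0.
    move=> S p _ _ sS pv0.
    exists `|p v0|; first by rewrite normr_gt0.
    move=> q _ _ Hq /=; apply/negP => /eqP q0.
    by move: (Hq v0 (sS v0 pv0)); rewrite q0 subr0 ltxx.
  + move=> z' tz' Hz'.
    have q0 : z' l v0 != 0 by exact: (Hz' l erefl).
    have w' := wedge_pt_sub (Hpi z' tz' l Ll) q0.
    have w := wedge_pt_sub (Hpi z tz l Ll) Sv0.
    have [v0a _] : vertex l v0 by exact: (tz.1 l Ll).2.1.2.2.1 v0 Sv0.
    have := starI Ha (v0a a erefl) (wedge1 w). move=> HH. exact: HH (wedge1 w').
- move=> z z' [tz vz] [tz' vz']; split.
  + move=> e l Ll; have [v' Vv' Iv'] := vz' l Ll.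
    split.
    * exists v' => //; apply/seteqP; split => t Ht.
      - exact: vtx_wedge Iv' Ht.
      - exact: wedge_pt_sub Ht (vtx_nz Iv').
    * exists (pi z); split; last exact: Hpi.
      by rewrite -e; exact: Hpi.
  + move=> H; apply: contrapT => nxy.
    have [f [cf [fx fy]]] := CR [set pi z'] (pi z) (T1 _) (fun e => nxy (esym e)).
    have oU : open (f @^-1` [set r | r < 2^-1]) by apply: (proj1 (continuousP f) cf); exact: open_lt.
    have oU' : open (f @^-1` [set r | 2^-1 < r]) by apply: (proj1 (continuousP f) cf); exact: open_gt.
    have fz : f (pi z) < 2^-1 by rewrite fx invr_gt0.
    have fz' : 2^-1 < f (pi z') by rewrite (fy _ erefl) invf_lt1 // ltr1n.
    have [a Aa Ha] := CI _ (pi z) oU fz.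
    have [a' Aa' Ha'] := CI _ (pi z') oU' fz'.
    set l := [set a] `|` [set a'].
    have Ll : Lam A l.
      split; first by rewrite finite_setU; split; exact: finite_set1.
      by move=> b [->|->].
    have [_ [t [w't wt]]] := H l Ll.
    have [v Vv Iv] := vz l Ll.
    have [v' Vv' Iv'] := vz' l Ll.
    have wx := wedge_pt_sub (Hpi z tz l Ll) (vtx_nz Iv).
    have wy := wedge_pt_sub (Hpi z' tz' l Ll) (vtx_nz Iv').
    have wt1 := wedge_pt_sub wt (vtx_nz Iv).
    have wt2 := wedge_pt_sub w't (vtx_nz Iv').
    have la : l a by left.
    have la' : l a' by right.
    have h1 := starI Ha (Vv.1 a la) (wx a la) t (wt1 a la).
    have h2 := starI Ha' (Vv'.1 a' la') (wy a' la') t (wt2 a' la').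
    by move: (lt_trans h2 h1); rewrite ltxx.
- move=> z z0 tz [tz0 vz0] Hs; apply: contrapT => nxy.
  have oU : open (~` [set pi z0]) by exact: closed_openC.
  have [a Aa Ha] := CI _ (pi z) oU nxy.
  set l := [set a].
  have Ll : Lam A l by exact: lam1.
  have [v Vv Iv] := vz0 l Ll.
  have wx := wedge_pt_sub (Hpi z tz l Ll) (Hs l Ll v Iv).
  have wy := wedge_pt_sub (Hpi z0 tz0 l Ll) (vtx_nz Iv).
  exact: (starI Ha (Vv.1 a erefl) (wedge1 wx) _ (wedge1 wy) erefl).
Qed.
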